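(* Let $\mathbb{F}$ be a field and $\mathcal{C}_2 \subsetneqq \mathcal{C}_1 \subseteq \mathbb{F}^{m \times n}$ linear codes with $\ell = \dim(\mathcal{C}_1) - \dim(\mathcal{C}_2)$. Then $$0 \leq d_{M,r+1}(\mathcal{C}_1,\mathcal{C}_2) - d_{M,r}(\mathcal{C}_1,\mathcal{C}_2) \leq \min\{m,n\} \quad \text{for } 1 \leq r \leq \ell - 1,$$ and $$d_{M,r}(\mathcal{C}_1,\mathcal{C}_2) + 1 \leq d_{M,r+m}(\mathcal{C}_1,\mathcal{C}_2) \quad \text{for } 1 \leq r \leq \ell - m.$$
   Context: ${\rm Row}(V)$ is the row space. For a subspace $\mathcal{L} \subseteq \mathbb{F}^n$, $\mathcal{V}_\mathcal{L} = \{V \in \mathbb{F}^{m\times n} \mid {\rm Row}(V) \subseteq \mathcal{L}\}$, and $d_{M,r}(\mathcal{C}_1,\mathcal{C}_2) = \min\{\dim \mathcal{L} \mid \mathcal{L}\subseteq\mathbb{F}^n, \dim(\mathcal{C}_1 \cap \mathcal{V}_\mathcal{L}) - \dim(\mathcal{C}_2 \cap \mathcal{V}_\mathcal{L}) \geq r\}$. *)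

(* Defs.v *)
From HB Require Import structures.
From mathcomp Require Import all_boot all_order all_algebra.
From mathcomp Require Import boolp.
Set Implicit Arguments. Unset Strict Implicit. Unset Printing Implicit Defensive.
Import GRing.Theory.
Local Open Scope ring_scope.

(* V_L = { V in F^{m x n} | Row(V) <= L }, i.e. every row of V lies in L:
   the intersection over i of the preimages of L under V |-> row i V. *)
Definition VL (F : fieldType) (m n : nat) (L : {vspace 'rV[F]_n}) :
  {vspace 'M[F]_(m, n)} :=
  (\bigcap_(i < m) (linfun (row i : 'M[F]_(m, n) -> 'rV[F]_n) @^-1: L))%VS.

(* Dimensions of subspaces of F^n are at most n, so the minimum is taken over
   k < n.+1; if no such L exists the (irrelevant) value is n. *)
Definition dMr (F : fieldType) (m n : nat) (C1 C2 : {vspace 'M[F]_(m, n)})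
  (r : nat) : nat :=
  \big[minn/n]_(k < n.+1 |
     `[< exists L : {vspace 'rV[F]_n},
           \dim L = k /\
           (r <= \dim (C1 :&: VL m L) - \dim (C2 :&: VL m L))%N >]) k.

(* Main.v *)
Require Import Defs.
From HB Require Import structures.
From mathcomp Require Import all_boot all_order all_algebra.
From mathcomp Require Import boolp.
From mathcomp Require Import zify.
Set Implicit Arguments. Unset Strict Implicit. Unset Printing Implicit Defensive.
Import GRing.Theory.
Local Open Scope ring_scope.

Lemma bigmin_le_seq (I : eqType) (r : seq I) (P : pred I) (F : I -> nat) d i0 :
  i0 \in r -> P i0 -> (\big[minn/d]_(i <- r | P i) F i <= F i0)%N.
Proof.
elim: r => [|a r IH] //; rewrite inE big_cons => /orP [/eqP <- | Hr] Pi.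
  by rewrite Pi geq_minl.
case: (P a); last exact: IH.
by rewrite (leq_trans (geq_minr _ _)) // IH.
Qed.

Section Aux.
Variables (F : fieldType) (m n : nat) (C1 C2 : {vspace 'M[F]_(m, n)}).
Hypothesis sC21 : (C2 <= C1)%VS.

Definition fL (L : {vspace 'rV[F]_n}) :=
  (\dim (C2 + (C1 :&: VL m L)) - \dim C2)%N.

Lemma fE L : (\dim (C1 :&: VL m L) - \dim (C2 :&: VL m L))%N = fL L.
Proof.
rewrite /fL; have := dimv_sum_cap C2 (C1 :&: VL m L).
rewrite capvA (capv_idPl sC21); lia.
Qed.

Lemma memVL (L : {vspace 'rV[F]_n}) (V : 'M[F]_(m, n)) :
  (V \in VL m L) = [forall i, row i V \in L].
Proof.
rewrite /VL memvE; apply/subv_bigcapP/forallP => H i.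
  by have := H i isT; rewrite -memvE -memv_preim lfunE.
by move=> _; rewrite -memvE -memv_preim lfunE /= H.
Qed.

Lemma VLS (L L' : {vspace 'rV[F]_n}) : (L <= L')%VS -> (VL m L <= VL m L')%VS.
Proof.
move=> sLL; apply/subvP => V; rewrite !memVL => /forallP H; apply/forallP => i.
exact: (subvP sLL _ (H i)).
Qed.

Lemma dimL_le (L : {vspace 'rV[F]_n}) : (\dim L <= n)%N.
Proof. by have := dimvS (subvf L); rewrite dimvf /= dim_matrix mul1r. Qed.

Lemma f_full : fL fullv = (\dim C1 - \dim C2)%N.
Proof.
rewrite /fL.
have -> : VL m (fullv : {vspace 'rV[F]_n}) = fullv.
  apply/eqP; rewrite eqEsubv subvf /=; apply/subvP => V _.
  by rewrite memVL; apply/forallP => i; rewrite memvf.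
by rewrite capvf (addv_idPr sC21).
Qed.

Lemma dim_full : \dim (fullv : {vspace 'rV[F]_n}) = n.
Proof. by rewrite dimvf /= dim_matrix mul1r. Qed.

Lemma dMr_le r L : (r <= fL L)%N -> (dMr C1 C2 r <= \dim L)%N.
Proof.
move=> H; rewrite /dMr.
have lt : (\dim L < n.+1)%N by rewrite ltnS dimL_le.
apply: (@bigmin_le_seq _ _ _ (fun k : 'I_n.+1 => k : nat) _ (Ordinal lt)).
  exact: mem_index_enum.
by apply/asboolP; exists L; split => //; rewrite fE.
Qed.

Lemma dMr_att r : (r <= \dim C1 - \dim C2)%N ->
  exists L, \dim L = dMr C1 C2 r /\ (r <= fL L)%N.
Proof.
move=> Hr; rewrite /dMr.
apply: (big_ind (fun x => exists L, \dim L = x /\ (r <= fL L)%N)).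
- by exists fullv; rewrite dim_full f_full.
- move=> x y Hx Hy; rewrite /minn; by case: ifP.
- move=> k /asboolP [L [HL Hf]]; exists L; split => //; by rewrite -fE.
Qed.

Lemma f_step r L : (1 <= r)%N -> (r <= \dim C1 - \dim C2 - 1)%N -> (r <= fL L)%N ->
  (dMr C1 C2 r.+1 <= \dim L + m)%N.
Proof.
move=> r1 Hr Hf.
case: (leqP r.+1 (fL L)) => Hf'.
  by rewrite (leq_trans (dMr_le Hf')) // leq_addr.
have Hfe : fL L = r by apply/eqP; rewrite eqn_leq Hf andbT -ltnS.
set X := (C1 :&: VL m L)%VS.
have dC2 : (\dim C2 <= \dim C1)%N := dimvS sC21.
have dC2X : (\dim C2 <= \dim (C2 + X))%N := dimvS (addvSl _ _).
have : ~~ (C1 <= C2 + X)%VS.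
  apply/negP => /dimvS; move: Hfe; rewrite /fL -/X; lia.
case/subvPn => V V1 VnX.
set S := <<[seq row i V | i <- enum 'I_m]>>%VS.
set L' := (L + S)%VS.
have dL' : (\dim L' <= \dim L + m)%N.
  apply: (leq_trans (dimv_add_leqif L S).1); rewrite leq_add2l.
  by have := dim_span [seq row i V | i <- enum 'I_m]; rewrite size_map size_enum_ord.
apply: (leq_trans _ dL'); apply: dMr_le.
have VL' : V \in VL m L'.
  rewrite memVL; apply/forallP => i; apply: (subvP (addvSr L S)).
  by apply: memv_span; apply: map_f; rewrite mem_enum.
set X' := (C1 :&: VL m L')%VS.
have sXX : (X <= X')%VS by apply: capvS; rewrite ?subvv // VLS // addvSl.
have VX' : V \in X' by rewrite memv_cap V1.
have sub : ((C2 + X) + <[V]> <= C2 + X')%VS.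
  rewrite subv_add (addvS (subvv _) sXX) /=.
  by rewrite -memvE (subvP (addvSr _ _)).
have V0 : V != 0 by apply: contraNneq VnX => ->; rewrite mem0v.
have cap0 : \dim ((C2 + X) :&: <[V]>) = 0%N.
  have := dimv_leqif_eq (capvSr (C2 + X) <[V]>).
  rewrite dim_vline V0 => -[le eqc].
  case: (leqP (\dim ((C2 + X) :&: <[V]>)) 0) => [|lt]; first lia.
  have : \dim ((C2 + X) :&: <[V]>) == 1%N by rewrite eqn_leq le lt.
  rewrite eqc => /eqP E.
  by move: VnX; rewrite memvE -E capvSl.
have := dimv_sum_cap (C2 + X) <[V]>; rewrite cap0 dim_vline V0 => E.
have := dimvS sub; rewrite /fL -/X' -/X in Hfe *; lia.
Qed.

Lemma VL0 : (C1 :&: VL m (0 : {vspace 'rV[F]_n}) = 0)%VS.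
Proof.
apply/eqP; rewrite -subv0; apply/subvP => V; rewrite memv_cap memVL memv0.
case/andP => _ /forallP H; apply/eqP/row_matrixP => i.
by rewrite row0; apply/eqP; rewrite -memv0.
Qed.

Lemma f_drop r L : (1 <= r)%N -> (r + m <= fL L)%N ->
  (dMr C1 C2 r + 1 <= \dim L)%N.
Proof.
move=> r1 Hf.
have L0 : L != 0%VS.
  apply: contraTneq Hf => ->; rewrite /fL VL0 addv0; lia.
set x := vpick L.
have xL : x \in L := memv_pick L.
have x0 : x != 0 by rewrite vpick0.
have [j xj] : exists j, x 0 j != 0.
  apply/existsP; apply: contraNT x0; rewrite negb_exists => /forallP H.
  apply/eqP/rowP => j; rewrite mxE; by move: (H j); rewrite negbK => /eqP.
set h := linfun (col j : 'rV[F]_n -> 'cV[F]_1).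
set g := linfun (col j : 'M[F]_(m, n) -> 'cV[F]_m).
set L'' := (L :&: lker h)%VS.
have dh : (1 <= \dim (h @: L))%N.
  rewrite lt0n dimv_eq0; apply: contraNneq xj => E.
  have := memv_img h xL; rewrite E memv0 lfunE /= => /eqP/matrixP/(_ 0 0).
  by rewrite !mxE => ->.
have dL'' : (\dim L'' + 1 <= \dim L)%N.
  by have := limg_ker_dim h L; rewrite -/L'' => <-; rewrite leq_add2l.
set X := (C1 :&: VL m L)%VS.
set X'' := (X :&: lker g)%VS.
have sX : (X'' <= C1 :&: VL m L'')%VS.
  apply/subvP => V; rewrite !memv_cap memv_ker lfunE /= => /andP [/andP [V1 VL1] gV].
  rewrite V1 /= memVL; apply/forallP => i.
  rewrite memv_cap memv_ker lfunE /=.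
  move: VL1; rewrite memVL => /forallP -> /=.
  have -> : col j (row i V) = row i (col j V) by apply/matrixP => a b; rewrite !mxE.
  by rewrite (eqP gV) row0.
have d1 := limg_ker_dim g X.
have d2 : (\dim (g @: X) <= m)%N.
  by have := dimvS (subvf (g @: X)); rewrite dimvf /= dim_matrix mulr1.
have sXX : (X'' <= X)%VS by apply: capvSl.
have d3 := dimv_sum_cap (C2 + X'') X.
have e1 : (C2 + X'' + X = C2 + X)%VS by rewrite -addvA (addv_idPr sXX).
have d4 : (\dim X'' <= \dim ((C2 + X'') :&: X))%N.
  by apply: dimvS; rewrite subv_cap sXX addvSr.
have d5 : (\dim (C2 + X'') <= \dim (C2 + C1 :&: VL m L''))%N.
  by apply: dimvS; apply: addvS; rewrite ?subvv.
have d6 : (\dim C2 <= \dim (C2 + X''))%N := dimvS (addvSl _ _).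
have Hr : (r <= fL L'')%N.
  move: Hf; rewrite /fL -/X; rewrite e1 in d3; rewrite -/X'' in d1.
  have d7 : (\dim X <= \dim X'' + m)%N by rewrite -d1 leq_add2l.
  clear d1 d2; lia.
have := dMr_le Hr; lia.
Qed.

End Aux.

Theorem proposition14 (F : fieldType) (m n : nat)
  (C1 C2 : {vspace 'M[F]_(m, n)}) :
  (C2 <= C1)%VS -> C2 != C1 ->
  let l := (\dim C1 - \dim C2)%N in
  (forall r : nat, (1 <= r <= l - 1)%N ->
     (dMr C1 C2 r <= dMr C1 C2 r.+1)%N /\
     (dMr C1 C2 r.+1 - dMr C1 C2 r <= minn m n)%N) /\
  (forall r : nat, (1 <= r <= l - m)%N ->
     (dMr C1 C2 r + 1 <= dMr C1 C2 (r + m))%N).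
Proof.
move=> s21 _ l; split.
  move=> r /andP [r1 rl].
  have h1 : (r.+1 <= \dim C1 - \dim C2)%N by move: rl; rewrite /l; lia.
  have h2 : (r <= \dim C1 - \dim C2)%N by move: rl; rewrite /l; lia.
  have [L [dL fL1]] := dMr_att s21 h1.
  have [L0 [dL0 fL0]] := dMr_att s21 h2.
  split.
    by rewrite -dL; apply: (dMr_le s21); apply: ltnW.
  have := f_step s21 r1 rl fL0; rewrite dL0 => H1.
  have := dimL_le L; rewrite dL => H2.
  rewrite leq_min; apply/andP; split; lia.
move=> r /andP [r1 rl].
have h1 : (r + m <= \dim C1 - \dim C2)%N by move: rl; rewrite /l; lia.
have [L [dL fL1]] := dMr_att s21 h1.
by rewrite -dL; apply: (f_drop s21).
Qed.
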